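(* Two epistemic logic programs $\Pi_1$ and $\Pi_2$ are strongly equivalent (in any of the four senses: strongly ELP-WV-, ASP-WV-, ELP-CWV- or ASP-CWV-equivalent) if and only if they have the same SE-function, i.e. $\mathcal{SE}_{\Pi_1}=\mathcal{SE}_{\Pi_2}$.
   Context: A literal over a set of atoms $\mathcal{A}$ is an atom $a$ or $\neg a$. An interpretation is $I\subseteq\mathcal{A}$; $I\models a$ iff $a\in I$, $I\models\neg\ell$ iff $I\not\models\ell$. A (plain) logic program $(\mathcal{A},\mathcal{R})$ has rules $a_1\vee\cdots\vee a_l \leftarrow a_{l+1},\ldots,a_m,\neg\ell_1,\ldots,\neg\ell_n$ ($\ell_i$ literals); $H(r)$ head, $B(r)$ body, $B^+(r)=\{a_{l+1},\ldots,a_m\}$; $M\models r$ iff $M\models B(r)$ implies $M\cap H(r)\neq\emptyset$; $\mathrm{Mods}(\Pi)$ is the set of models. GL-reduct: $\Pi^I=(\mathcal{A},\{H(r)\leftarrow B^+(r)\mid r\in\mathcal{R},\ I\models\neg\ell\ \forall\neg\ell\in B(r)\})$. Answer set: model $M$ of $\Pi$ such that no $M'\subset M$ is a model of $\Pi^M$; $AS(\Pi)$ the set of answer sets ($\neg\neg\neg a$ treated as $\neg a$). An SE-model of $\Pi$ is $(X,Y)$ with $X\subseteq Y\subseteq\mathcal{A}$, $Y\models\Pi$, $X\models\Pi^Y$; $\mathrm{SE}(\Pi)$ the set of SE-models. An ELP is $(\mathcal{A},\mathcal{E},\mathcal{R})$ with $\mathcal{E}$ a set of epistemic literals $\mathbf{not}\,\ell$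 and rules $a_1\vee\cdots\vee a_k\leftarrow \ell_1,\ldots,\ell_m,\xi_1,\ldots,\xi_j,\neg\xi_{j+1},\ldots,\neg\xi_n$, $\xi_i\in\mathcal{E}$. Union of ELPs is componentwise; a plain logic program is an ELP with no epistemic literals. A guess is $\Phi\subseteq\mathcal{E}$; $\mathcal{I}$ is $\Phi$-compatible w.r.t. $\mathcal{E}$ iff $\mathcal{I}\neq\emptyset$, every $\mathbf{not}\,\ell\in\Phi$ has some $I\in\mathcal{I}$ with $I\not\models\ell$, and every $\mathbf{not}\,\ell\in\mathcal{E}\setminus\Phi$ has $I\models\ell$ for all $I\in\mathcal{I}$. The epistemic reduct $\Pi^\Phi=(\mathcal{A},\mathcal{R}^\Phi)$ replaces each $\mathbf{not}\,\ell\in\Phi$ by $\top$ and every other $\mathbf{not}$ by $\neg$. A candidate world view (CWV) of $\Pi$ is $\mathcal{M}=AS(\Pi^\Phi)$ that is $\Phi$-compatible w.r.t. $\mathcal{E}$, for some guess $\Phi$; a world view (WV) is a CWV whose associated guess is subset-maximal among associated guesses of CWVs. CWV-/WV-equivalence means equal sets of CWVs/WVs. Strong ELP-(C)WV-equivalence of $\Pi_1,\Pi_2$: for every ELP $\Pi$, $\Pi_1\cup\Pi$ and $\Pi_2\cup\Pi$ are (C)WV-equivalent; strong ASP-(C)WV-equivalence: the same for every plain logic program $\Pi$. $\Phi$ is realizable in $\Pi$ iff some subset of $\mathrm{Mods}(\Pi^\Phi)$ is $\Phi$-compatible w.r.t. $\mathcal{E}$. SE-function: $\mathcal{SE}_\Pi(\Phi)=\mathrm{SE}(\Pi^\Phi)$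 if $\Phi$ is realizable in $\Pi$, else $\emptyset$. *)

(* Defs.v *)
From HB Require Import structures.
From mathcomp Require Import all_boot.
From mathcomp Require Export finmap.
Set Implicit Arguments. Unset Strict Implicit. Unset Printing Implicit Defensive.

Local Open Scope fset_scope.

Section ELP.
Variable atom : choiceType.

(* A literal is a pair (b, a): (true, a) is the atom a, (false, a) is ¬a. *)
Local Notation lit := (bool * atom)%type.

Definition sat_lit (I : {fset atom}) (l : lit) : bool :=
  if l.1 then l.2 \in I else l.2 \notin I.

(* rule  phead <- ppos, ¬ℓ (ℓ ∈ pneg) ; B+(r) = ppos *)
Record prule := PRule { phead : seq atom; ppos : seq atom; pneg : seq lit }.
Record plp := PLP { plp_atoms : {fset atom}; plp_rules : seq prule }.

Definition prule_sat (M : {fset atom}) (r : prule) : bool :=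
  (all (fun a => a \in M) (ppos r) && all (fun l => ~~ sat_lit M l) (pneg r))
  ==> has (fun a => a \in M) (phead r).

Definition is_model (P : plp) (M : {fset atom}) : Prop :=
  M `<=` plp_atoms P /\ all (prule_sat M) (plp_rules P).

Definition gl_reduct (P : plp) (I : {fset atom}) : plp :=
  PLP (plp_atoms P)
      [seq PRule (phead r) (ppos r) [::] | r <- plp_rules P
         & all (fun l => ~~ sat_lit I l) (pneg r)].

Definition answer_set (P : plp) (M : {fset atom}) : Prop :=
  is_model P M /\ forall M', M' `<` M -> ~ is_model (gl_reduct P M) M'.

Definition se_model (P : plp) (X Y : {fset atom}) : Prop :=
  X `<=` Y /\ Y `<=` plp_atoms P /\ is_model P Y /\ is_model (gl_reduct P Y) X.

(* body elements: ℓ, ¬ℓ, not ℓ, ¬ not ℓ  (ℓ a literal) *)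
Inductive belem :=
  | BLit of lit | BNotLit of lit | BEp of lit | BNotEp of lit.
Record erule := ERule { ehead : seq atom; ebody : seq belem }.
(* (A, E, R); E is the set of epistemic literals  not ℓ, represented by ℓ *)
Record elp := ELP { elp_atoms : {fset atom}; elp_elits : {fset lit};
                    elp_rules : seq erule }.

Definition elp_union (P Q : elp) : elp :=
  ELP (elp_atoms P `|` elp_atoms Q) (elp_elits P `|` elp_elits Q)
      (elp_rules P ++ elp_rules Q).

Definition belem_atom (b : belem) : atom :=
  match b with BLit l | BNotLit l | BEp l | BNotEp l => l.2 end.
Definition belem_elit (b : belem) : option lit :=
  match b with BEp l | BNotEp l => Some l | _ => None end.

Definition wf_elp (P : elp) : Prop :=
  (forall l, l \in elp_elits P -> l.2 \in elp_atoms P) /\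
  all (fun r =>
     [&& all (fun a => a \in elp_atoms P) (ehead r),
         all (fun b => belem_atom b \in elp_atoms P) (ebody r) &
         all (fun b => if belem_elit b is Some l then l \in elp_elits P else true)
             (ebody r)]) (elp_rules P).

Definition is_plain (P : elp) : Prop :=
  elp_elits P = fset0 /\
  all (fun r => all (fun b => ~~ belem_elit b) (ebody r)) (elp_rules P).

(* epistemic reduct of a body element: Some (positive atoms, negated literals),
   None when the element becomes ⊥ (¬⊤).  ¬¬¬a is treated as ¬a. *)
Definition belem_reduct (Phi : {fset lit}) (b : belem)
  : option (seq atom * seq lit) :=
  match b with
  | BLit l => if l.1 then Some ([:: l.2], [::]) else Some ([::], [:: (true, l.2)])
  | BNotLit l => Some ([::], [:: l])
  | BEp l => if l \in Phi then Some ([::], [::]) else Some ([::], [:: l])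
  | BNotEp l => if l \in Phi then None
                else Some ([::], [:: (~~ l.1, l.2)])
  end.

Fixpoint body_reduct (Phi : {fset lit}) (bs : seq belem)
  : option (seq atom * seq lit) :=
  match bs with
  | [::] => Some ([::], [::])
  | b :: bs' =>
      match belem_reduct Phi b, body_reduct Phi bs' with
      | Some (p, n), Some (p', n') => Some (p ++ p', n ++ n')
      | _, _ => None
      end
  end.

(* rules whose body contains ⊥ are dropped (they are trivially satisfied and
   are removed by every GL-reduct) *)
Definition erule_reduct (Phi : {fset lit}) (r : erule) : option prule :=
  if body_reduct Phi (ebody r) is Some (p, n) then Some (PRule (ehead r) p n)
  else None.

Definition elp_reduct (P : elp) (Phi : {fset lit}) : plp :=
  PLP (elp_atoms P) (pmap (erule_reduct Phi) (elp_rules P)).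

Definition compatible (Ic : {fset atom} -> Prop) (Phi E : {fset lit}) : Prop :=
  (exists I, Ic I) /\
  (forall l, l \in Phi -> exists I, Ic I /\ ~~ sat_lit I l) /\
  (forall l, l \in E -> l \notin Phi -> forall I, Ic I -> sat_lit I l).

Definition cwv_with (P : elp) (Phi : {fset lit}) (Ic : {fset atom} -> Prop)
  : Prop :=
  Phi `<=` elp_elits P /\
  (forall I, Ic I <-> answer_set (elp_reduct P Phi) I) /\
  compatible Ic Phi (elp_elits P).

Definition is_cwv (P : elp) (Ic : {fset atom} -> Prop) : Prop :=
  exists Phi, cwv_with P Phi Ic.

Definition is_wv (P : elp) (Ic : {fset atom} -> Prop) : Prop :=
  exists Phi, cwv_with P Phi Ic /\
    forall Phi' Ic', cwv_with P Phi' Ic' -> ~~ (Phi `<` Phi').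

Definition cwv_equiv (P Q : elp) : Prop :=
  forall Ic, is_cwv P Ic <-> is_cwv Q Ic.
Definition wv_equiv (P Q : elp) : Prop :=
  forall Ic, is_wv P Ic <-> is_wv Q Ic.

Definition strong_elp_wv_equiv (P1 P2 : elp) : Prop :=
  forall P, wf_elp P -> wv_equiv (elp_union P1 P) (elp_union P2 P).
Definition strong_asp_wv_equiv (P1 P2 : elp) : Prop :=
  forall P, wf_elp P -> is_plain P -> wv_equiv (elp_union P1 P) (elp_union P2 P).
Definition strong_elp_cwv_equiv (P1 P2 : elp) : Prop :=
  forall P, wf_elp P -> cwv_equiv (elp_union P1 P) (elp_union P2 P).
Definition strong_asp_cwv_equiv (P1 P2 : elp) : Prop :=
  forall P, wf_elp P -> is_plain P -> cwv_equiv (elp_union P1 P) (elp_union P2 P).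

Definition realizable (P : elp) (Phi : {fset lit}) : Prop :=
  exists Ic : {fset atom} -> Prop,
    (forall I, Ic I -> is_model (elp_reduct P Phi) I) /\
    compatible Ic Phi (elp_elits P).

Definition SE_fun (P : elp) (Phi : {fset lit}) (X Y : {fset atom}) : Prop :=
  realizable P Phi /\ se_model (elp_reduct P Phi) X Y.

Definition same_SE_fun (P1 P2 : elp) : Prop :=
  forall Phi, Phi `<=` elp_elits P1 -> Phi `<=` elp_elits P2 ->
    forall X Y, SE_fun P1 Phi X Y <-> SE_fun P2 Phi X Y.

End ELP.

(* Main.v *)
Require Import Defs.
From HB Require Import structures.
From mathcomp Require Import all_boot finmap.
From Stdlib Require Import Classical.
Set Implicit Arguments. Unset Strict Implicit. Unset Printing Implicit Defensive.
Local Open Scope fset_scope.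

Section Work.
Variable atom : choiceType.
Local Notation lit := (bool * atom)%type.
Implicit Types (Phi Psi : {fset lit}) (A X Y M : {fset atom}) (P Q U V : elp atom).

Definition elemY Phi Y (b : belem atom) : option (seq atom) :=
  match belem_reduct Phi b with
  | Some (p, n) => if all (fun l => ~~ sat_lit Y l) n then Some p else None
  | None => None end.
Definition bodyY Phi Y (bs : seq (belem atom)) : option (seq atom) :=
  match body_reduct Phi bs with
  | Some (p, n) => if all (fun l => ~~ sat_lit Y l) n then Some p else None
  | None => None end.

Lemma bodyY_cons Phi Y b bs : bodyY Phi Y (b :: bs) =
  match elemY Phi Y b, bodyY Phi Y bs with
  | Some p, Some p' => Some (p ++ p') | _, _ => None end.
Proof.
rewrite /bodyY /elemY /=.
case: (belem_reduct Phi b) => [[p n]|]; case: (body_reduct Phi bs) => [[p' n']|] //=;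
  rewrite ?all_cat; do ?case: (all _ _) => //.
Qed.

Definition sem Phi Y X (r : erule atom) : bool :=
  if bodyY Phi Y (ebody r) is Some p then
    all (fun a => a \in X) p ==> has (fun a => a \in X) (ehead r)
  else true.

Lemma model_sem P Phi Y : is_model (elp_reduct P Phi) Y <->
  Y `<=` elp_atoms P /\ all (sem Phi Y Y) (elp_rules P).
Proof.
rewrite /is_model /elp_reduct /= all_pmap.
suff -> : all [pred i | oapp (prule_sat Y) true (erule_reduct Phi i)] (elp_rules P)
   = all (sem Phi Y Y) (elp_rules P) by [].
apply: eq_all => r /=; rewrite /erule_reduct /sem /bodyY.
case: (body_reduct Phi (ebody r)) => [[p n]|] //=; rewrite /prule_sat /=.
by case: (all _ n); case: (all _ p).
Qed.

Lemma glmodel_sem P Phi Y X : is_model (gl_reduct (elp_reduct P Phi) Y) X <->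
  X `<=` elp_atoms P /\ all (sem Phi Y X) (elp_rules P).
Proof.
rewrite /is_model /elp_reduct /gl_reduct /= all_map all_filter all_pmap.
set L := all _ (elp_rules P); suff -> : L = all (sem Phi Y X) (elp_rules P) by [].
rewrite /L; apply: eq_all => r /=; rewrite /erule_reduct /sem /bodyY.
case: (body_reduct Phi (ebody r)) => [[p n]|] //=; rewrite /prule_sat /=.
by case: (all _ n); case: (all _ p).
Qed.


Definition agree (A : {fset atom}) Y Y' := forall a, a \in A -> (a \in Y) = (a \in Y').

Lemma sat_lit_agree A Y Y' l : agree A Y Y' -> l.2 \in A -> sat_lit Y l = sat_lit Y' l.
Proof. by move=> h hl; rewrite /sat_lit (h _ hl). Qed.

Lemma elemY_local Phi Y Y' b :
  (belem_atom b \in Y) = (belem_atom b \in Y') -> elemY Phi Y b = elemY Phi Y' b.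
Proof.
by case: b => [[[] a]|[[] a]|[[] a]|[[] a]] /= h; rewrite /elemY /sat_lit /= ?h //;
  case: ifP => //= _; rewrite /sat_lit /= h.
Qed.

Lemma elemY_atoms Phi Y b p : elemY Phi Y b = Some p -> all (pred1 (belem_atom b)) p.
Proof.
case: b => [[[] a]|[[] a]|[[] a]|[[] a]]; rewrite /elemY /=;
  do ?case: ifP => //= _; by case=> <- /=; rewrite ?eqxx.
Qed.

Lemma bodyY_local A Phi Y Y' bs : agree A Y Y' ->
  all (fun b => belem_atom b \in A) bs -> bodyY Phi Y bs = bodyY Phi Y' bs.
Proof.
move=> h; elim: bs => [|b bs IH] //= /andP[hb hbs].
by rewrite !bodyY_cons IH // (@elemY_local _ Y Y') // h.
Qed.

Lemma bodyY_atoms A Phi Y bs p : all (fun b => belem_atom b \in A) bs ->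
  bodyY Phi Y bs = Some p -> all (fun a => a \in A) p.
Proof.
elim: bs p => [|b bs IH] p /=; first by move=> _; rewrite /bodyY /=; case=> <-.
move=> /andP[hb hbs]; rewrite bodyY_cons.
case E1: (elemY Phi Y b) => [q|] //; case E2: (bodyY Phi Y bs) => [q'|] // [<-].
rewrite all_cat (IH q') // andbT.
move/elemY_atoms: E1; apply: sub_all => a /eqP ->; exact hb.
Qed.

Definition rule_in (A : {fset atom}) (r : erule atom) : bool :=
  all (fun a => a \in A) (ehead r) && all (fun b => belem_atom b \in A) (ebody r).

Lemma sem_local A Phi Y Y' X X' r : rule_in A r -> agree A Y Y' -> agree A X X' ->
  sem Phi Y X r = sem Phi Y' X' r.
Proof.
move=> /andP[hh hb] hY hX; rewrite /sem (bodyY_local Phi hY hb).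
case E: (bodyY Phi Y' (ebody r)) => [p|] //.
have hp := bodyY_atoms hb E.
congr (_ ==> _).
  by apply: eq_in_all => a /(allP hp) /hX.
by apply: eq_in_has => a /(allP hh) /hX.
Qed.

Definition guess_agree Phi Phi' (r : erule atom) : bool :=
  all (fun b => if belem_elit b is Some l then (l \in Phi) == (l \in Phi') else true)
      (ebody r).

Lemma sem_guess Phi Phi' Y X r : guess_agree Phi Phi' r -> sem Phi Y X r = sem Phi' Y X r.
Proof.
move=> h; rewrite /sem; suff -> : bodyY Phi Y (ebody r) = bodyY Phi' Y (ebody r) by [].
move: h; rewrite /guess_agree; elim: (ebody r) => [|b bs IH] //= /andP[hb hbs]; rewrite !bodyY_cons IH //.
suff -> : elemY Phi Y b = elemY Phi' Y b by [].
by case: b hb => l //= /eqP h; rewrite /elemY /= h.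
Qed.

Lemma sem_inv Phi Phi' Y X r : Phi `<=` Phi' ->
  (forall l, l \in Phi' -> l \notin Phi -> ~~ sat_lit Y l) ->
  sem Phi' Y X r = sem Phi Y X r.
Proof.
move=> /fsubsetP sub hv; rewrite /sem.
suff -> : bodyY Phi' Y (ebody r) = bodyY Phi Y (ebody r) by [].
elim: (ebody r) => [|b bs IH] //=; rewrite !bodyY_cons IH.
suff -> : elemY Phi' Y b = elemY Phi Y b by [].
case: b => l //=; rewrite /elemY /=.
- case h1: (l \in Phi); first by rewrite (sub _ h1).
  case h2: (l \in Phi') => //=; by rewrite (hv _ h2 (negbT h1)).
- case h1: (l \in Phi); first by rewrite (sub _ h1).
  case h2: (l \in Phi') => //=.
  have := hv _ h2 (negbT h1); rewrite /sat_lit /=.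
  by case: l h1 h2 => [[] a] /= _ _; case: (a \in Y).
Qed.

Lemma all_eq2 (T : Type) (p q h : pred T) s : all h s ->
  (forall x, h x -> p x = q x) -> all p s = all q s.
Proof. by elim: s => //= x s IH /andP[hx hs] e; rewrite e // IH. Qed.

Lemma AS_sem P Phi M : answer_set (elp_reduct P Phi) M <->
  [/\ M `<=` elp_atoms P, all (sem Phi M M) (elp_rules P) &
      forall M', M' `<` M -> ~~ all (sem Phi M M') (elp_rules P)].
Proof.
rewrite /answer_set model_sem; split.
  move=> [[h1 h2] h3]; split=> // M' hM'; apply/negP => hall.
  apply: (h3 _ hM'); apply/glmodel_sem; split=> //.
  exact: fsubset_trans (fproper_sub hM') h1.
move=> [h1 h2 h3]; split=> // M' hM' /glmodel_sem [_ hall].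
by move: (h3 _ hM'); rewrite hall.
Qed.

Lemma se_sem P Phi X Y : se_model (elp_reduct P Phi) X Y <->
  [/\ X `<=` Y, Y `<=` elp_atoms P, all (sem Phi Y Y) (elp_rules P)
    & all (sem Phi Y X) (elp_rules P)].
Proof.
rewrite /se_model model_sem glmodel_sem /=; split.
  by move=> [h1 [h2 [[_ h3] [_ h4]]]].
move=> [h1 h2 h3 h4]; do !split => //.
exact: fsubset_trans h1 h2.
Qed.

Lemma wf_rule_in P : wf_elp P -> all (rule_in (elp_atoms P)) (elp_rules P).
Proof.
move=> [_ h]; apply: sub_all h => r /and3P[h1 h2 _]; by rewrite /rule_in h1 h2.
Qed.

Lemma wf_guess P Phi Phi' : wf_elp P ->
  (forall l, l \in elp_elits P -> (l \in Phi) = (l \in Phi')) ->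
  all (guess_agree Phi Phi') (elp_rules P).
Proof.
move=> [_ h] e; apply: sub_all h => r /and3P[_ _ h3]; rewrite /guess_agree.
apply: sub_all h3 => b; case: (belem_elit b) => // l /e ->; exact: eqxx.
Qed.

Lemma agreeI A Y : agree A Y (Y `&` A).
Proof. by move=> a ha; rewrite in_fsetI ha andbT. Qed.
Arguments agreeI : clear implicits.

Lemma conv P Psi Phi Y X : wf_elp P ->
  (forall l, l \in elp_elits P -> (l \in Psi) = (l \in Phi)) ->
  all (sem Psi Y X) (elp_rules P) =
  all (sem Phi (Y `&` elp_atoms P) (X `&` elp_atoms P)) (elp_rules P).
Proof.
move=> wf e.
have h := wf_rule_in wf; have g := wf_guess wf e.
have hg : all (fun r => rule_in (elp_atoms P) r && guess_agree Psi Phi r) (elp_rules P).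
  by rewrite all_predI h g.
apply: (all_eq2 hg) => r /andP[h1 h2].
rewrite (sem_guess Y X h2); exact: (sem_local Phi h1 (agreeI _ _) (agreeI _ _)).
Qed.

Lemma sat_lit_I A Y l : l.2 \in A -> sat_lit (Y `&` A) l = sat_lit Y l.
Proof. move=> h; symmetry; exact: (sat_lit_agree (agreeI A Y) h). Qed.

Lemma sym_SE P1 P2 : same_SE_fun P1 P2 -> same_SE_fun P2 P1.
Proof. by move=> h Phi h1 h2 X Y; split; move/(h Phi h2 h1 X Y). Qed.

Lemma fwd P1 P2 Q : wf_elp P1 -> wf_elp P2 ->
  elp_atoms P1 = elp_atoms P2 -> elp_elits P1 = elp_elits P2 ->
  same_SE_fun P1 P2 ->
  forall Ic, is_cwv (elp_union P1 Q) Ic -> is_cwv (elp_union P2 Q) Ic.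
Proof.
move=> wf1 wf2 sA sE hSE Ic [Psi [hsub [hIc hcomp]]].
set A := elp_atoms P1 in sA *; set E := elp_elits P1 in sE *.
pose Phi := Psi `&` E.
have hPhiE : Phi `<=` E by exact: fsubsetIr.
have hPhiE2 : Phi `<=` elp_elits P2 by rewrite -sE.
have agE : forall l, l \in E -> (l \in Psi) = (l \in Phi).
  by move=> l hl; rewrite in_fsetI hl andbT.
have conv1 := fun Y X => conv Y X wf1 agE.
have agE2 : forall l, l \in elp_elits P2 -> (l \in Psi) = (l \in Phi).
  by rewrite -sE.
have conv2 := fun Y X => conv Y X wf2 agE2.
rewrite -sA in conv2.
have real1 : realizable P1 Phi.
  exists (fun J => exists I, Ic I /\ J = I `&` A); split.
    move=> J [I [/hIc /AS_sem [_ hI _] ->]]; apply/model_sem; split.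
      exact: fsubsetIr.
    by move: hI; rewrite /= all_cat conv1 => /andP[].
  case: hcomp => [[I hI] [h2 h3]]; split; first by exists (I `&` A); exists I.
  split.
    move=> l; rewrite in_fsetI => /andP[/h2 [I' [hI' hl]] hlE].
    exists (I' `&` A); split; first by exists I'.
    by rewrite sat_lit_I // (proj1 wf1).
  move=> l hlE hlP J [I' [hI' ->]]; rewrite sat_lit_I; last by rewrite (proj1 wf1).
  apply: h3 hI'; first by rewrite /= in_fsetU hlE.
  by move: hlP; rewrite in_fsetI hlE andbT.
have hSEeq : forall X Y, se_model (elp_reduct P1 Phi) X Y <-> se_model (elp_reduct P2 Phi) X Y.
  have [J [hJ [[J0 hJ0] _]]] := real1.
  have real2 : realizable P2 Phi.
    have : SE_fun P1 Phi J0 J0.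
      split=> //; have /model_sem [h1 h2] := hJ _ hJ0.
      by apply/se_sem; split.
    by move/(hSE Phi hPhiE hPhiE2) => [].
  move=> X Y; split.
    by move=> h; have /(hSE Phi hPhiE hPhiE2) [] : SE_fun P1 Phi X Y by [].
  by move=> h; have /(hSE Phi hPhiE hPhiE2) [] : SE_fun P2 Phi X Y by [].
have tr : forall M Y, M `<=` Y ->
   (all (sem Psi Y Y) (elp_rules P1) && all (sem Psi Y M) (elp_rules P1)) =
   (all (sem Psi Y Y) (elp_rules P2) && all (sem Psi Y M) (elp_rules P2)).
  move=> M Y hMY; rewrite !conv1 !conv2.
  apply/idP/idP => /andP[h1 h2].
    have /hSEeq /se_sem [_ _ -> ->] // : se_model (elp_reduct P1 Phi) (M `&` A) (Y `&` A).
    apply/se_sem; split=> //; [exact: fsetSI | exact: fsubsetIr].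
  have /hSEeq /se_sem [_ _ -> ->] // : se_model (elp_reduct P2 Phi) (M `&` A) (Y `&` A).
  apply/se_sem; split=> //; [exact: fsetSI | rewrite -sA; exact: fsubsetIr].
exists Psi; split; first by rewrite /= -sE.
split; last by rewrite /= -sE.
- move=> I; rewrite hIc !AS_sem /= -sA !all_cat.
  have trI := tr I I (fsubset_refl I); rewrite !andbb in trI.
  split=> [[h1 /andP[h2 h3] h4]|[h1 /andP[h2 h3] h4]]; split=> //.
  + by rewrite -trI h2 h3.
  + move=> M' hM'; rewrite all_cat; apply/negP=> /andP[h5 h6]; move: (h4 _ hM'); rewrite all_cat.
    have e := tr M' I (fproper_sub hM'); rewrite -trI h2 h5 /= in e.
    by rewrite e h6.
  + by rewrite trI h2 h3.
  + move=> M' hM'; rewrite all_cat; apply/negP=> /andP[h5 h6]; move: (h4 _ hM'); rewrite all_cat.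
    have e := tr M' I (fproper_sub hM'); rewrite trI h2 h5 /= in e.
    by rewrite -e h6.
Qed.

Lemma compat_sub Ic Phi Phi' E : Phi `<=` E ->
  compatible Ic Phi E -> compatible Ic Phi' E -> Phi `<=` Phi'.
Proof.
move=> /fsubsetP s [_ [h1 _]] [_ [_ h2]]; apply/fsubsetP => l hl.
have [I [hI hs]] := h1 l hl.
apply/negPn/negP => hn.
by move: (h2 l (s _ hl) hn I hI); rewrite (negbTE hs).
Qed.

Lemma compat_uniq Ic Phi Phi' E : Phi `<=` E -> Phi' `<=` E ->
  compatible Ic Phi E -> compatible Ic Phi' E -> Phi = Phi'.
Proof.
move=> s s' c c'; apply/eqP; rewrite eqEfsubset.
by rewrite (compat_sub s c c') (compat_sub s' c' c).
Qed.

Lemma cwv_wv1 U V : elp_elits U = elp_elits V -> cwv_equiv U V ->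
  forall Ic, is_wv U Ic -> is_wv V Ic.
Proof.
move=> sE ce Ic [Phi [hc hmax]].
have [Phi0 hc0] : is_cwv V Ic by apply/ce; exists Phi.
have e : Phi0 = Phi.
  apply: (compat_uniq (proj1 hc0) _ (proj2 (proj2 hc0))); first by rewrite -sE (proj1 hc).
  by rewrite -sE; exact: (proj2 (proj2 hc)).
subst Phi0; exists Phi; split=> // Phi' Ic' hc'.
have [Phi'' hc''] : is_cwv U Ic' by apply/ce; exists Phi'.
have e : Phi'' = Phi'.
  apply: (compat_uniq (proj1 hc'') _ (proj2 (proj2 hc''))); first by rewrite sE (proj1 hc').
  by rewrite sE; exact: (proj2 (proj2 hc')).
subst Phi''; exact: hmax hc''.
Qed.

Lemma cwv_wv U V : elp_elits U = elp_elits V -> cwv_equiv U V -> wv_equiv U V.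
Proof.
move=> sE ce Ic; split; first exact: cwv_wv1.
apply: cwv_wv1 => // J; exact: iff_sym.
Qed.

Lemma all_allpairs (S T R : Type) (p : pred R) (f : S -> T -> R) s (t : S -> seq T) :
  all p [seq f x y | x <- s, y <- t x] = all (fun x => all (fun y => p (f x y)) (t x)) s.
Proof. by elim: s => //= x s IH; rewrite all_cat all_map IH. Qed.

Lemma all_flatten_map (S R : Type) (p : pred R) (F : S -> seq R) s :
  all p (flatten (map F s)) = all (fun x => all p (F x)) s.
Proof. by elim: s => //= x s IH; rewrite all_cat IH. Qed.

Lemma sem_0 Phi Y X h : sem Phi Y X (ERule h [::]) = has (fun a => a \in X) h.
Proof. by []. Qed.
Lemma sem_p Phi Y X h x : sem Phi Y X (ERule h [:: BLit (true, x)]) = (x \in X) ==> has (fun a => a \in X) h.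
Proof. by rewrite /sem /bodyY /= andbT. Qed.
Lemma sem_pp Phi Y X h x y : sem Phi Y X (ERule h [:: BLit (true, x); BLit (true, y)]) =
  [&& x \in X & y \in X] ==> has (fun a => a \in X) h.
Proof. by rewrite /sem /bodyY /= andbT. Qed.
Lemma sem_pn Phi Y X h x b : sem Phi Y X (ERule h [:: BLit (true, x); BLit (false, b)]) =
  (b \notin Y) ==> ((x \in X) ==> has (fun a => a \in X) h).
Proof. by rewrite /sem /bodyY /sat_lit /= andbT; case: (b \in Y) => //=; rewrite andbT. Qed.

Lemma mem_enum_fset (A : {fset atom}) a : (a \in enum_fset A) = (a \in A).
Proof. by []. Qed.

Definition gad := (atom * ({fset atom} * {fset atom}))%type.

Definition gad_rules A (t : gad) : seq (erule atom) :=
  [seq ERule [:: a] [:: BLit (true, t.1)] | a <- enum_fset t.2.1] ++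
  [seq ERule [:: a] [:: BLit (true, b); BLit (true, t.1)]
     | a <- enum_fset (t.2.2 `\` t.2.1), b <- enum_fset (t.2.2 `\` t.2.1)] ++
  [seq ERule [::] [:: BLit (true, t.1); BLit (true, a)] | a <- enum_fset (A `\` t.2.2)] ++
  [seq ERule [::] [:: BLit (true, t.1); BLit (false, b)] | b <- enum_fset (t.2.2 `\` t.2.1)].

Definition Qrules A (T : seq gad) : seq (erule atom) :=
  ERule (map fst T) [::] ::
  [seq ERule [::] [:: BLit (true, x); BLit (true, y)]
     | x <- map fst T, y <- [seq y <- map fst T | y != x]] ++
  flatten (map (gad_rules A) T).

Definition gad_ok A Y X (t : gad) : Prop :=
  [/\ {subset t.2.1 <= X},
      (forall a b, a \in t.2.2 `\` t.2.1 -> b \in t.2.2 `\` t.2.1 -> b \in X -> a \in X),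
      (forall a, a \in A `\` t.2.2 -> a \notin X) &
      (forall b, b \in t.2.2 `\` t.2.1 -> b \in Y)].

Lemma gad_sem A Phi Y X t : t.1 \in X ->
  all (sem Phi Y X) (gad_rules A t) <-> gad_ok A Y X t.
Proof.
move=> hc; rewrite /gad_rules !all_cat !all_map all_allpairs; split.
  case/and4P=> [h1 h2 h3 h4]; split.
  - move=> a ha; have := allP h1 a ha; rewrite /= sem_p hc /=; by rewrite orbF.
  - move=> a b ha hb hbX; have := allP (allP h2 a ha) b hb.
    by rewrite /= sem_pp hc hbX /= orbF.
  - move=> a ha; have := allP h3 a ha; by rewrite /= sem_pp hc /=.
  - move=> b hb; have := allP h4 b hb; rewrite /= sem_pn hc /= implybF.
    by rewrite negbK.
case=> h1 h2 h3 h4; apply/and4P; split.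
- apply/allP => a ha /=; by rewrite sem_p /= (h1 _ ha) implybT.
- apply/allP => a ha; apply/allP => b hb /=; rewrite sem_pp.
  by apply/implyP => /andP[hbX _]; rewrite /= (h2 a b).
- apply/allP => a ha /=; rewrite sem_pp /=; by rewrite (negbTE (h3 _ ha)) andbF.
- apply/allP => b hb /=; by rewrite sem_pn (h4 _ hb).
Qed.

Lemma Q_sem A T Phi Y X :
  all (sem Phi Y X) (Qrules A T) <->
  [/\ has (fun c => c \in X) (map fst T),
      (forall x y, x \in map fst T -> y \in map fst T -> x \in X -> y \in X -> x = y)
    & forall t, t \in T -> t.1 \in X -> gad_ok A Y X t].
Proof.
rewrite /Qrules /= sem_0 all_cat all_allpairs all_flatten_map; split.
  case/and3P=> [h1 h2 h3]; split=> //.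
    move=> x y hx hy hxX hyX; apply/eqP/negPn/negP => hne.
    have := allP (allP h2 x hx) y; rewrite mem_filter eq_sym hne hy /= => /(_ isT).
    by rewrite sem_pp hxX hyX.
  by move=> t ht hc; apply/(gad_sem _ _ _ hc); exact: (allP h3 t ht).
case=> h1 h2 h3; apply/and3P; split=> //.
  apply/allP => x hx; apply/allP => y; rewrite mem_filter => /andP[hne hy] /=.
  rewrite sem_pp /=; apply/negP => /andP[hxX hyX].
  by move: hne; rewrite (h2 x y hx hy hxX hyX) eqxx.
apply/allP => t ht; case hc: (t.1 \in X).
  by apply/(gad_sem _ _ _ hc); exact: h3.
rewrite /gad_rules !all_cat !all_map all_allpairs.
apply/and4P; split.
- by apply/allP => a _ /=; rewrite sem_p hc.
- by apply/allP => a _; apply/allP => b _ /=; rewrite sem_pp hc andbF.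
- by apply/allP => a _ /=; rewrite sem_pp hc.
- by apply/allP => b _ /=; rewrite sem_pn hc implybT.
Qed.

Lemma all_local P Phi Y Y' X X' : wf_elp P -> agree (elp_atoms P) Y Y' ->
  agree (elp_atoms P) X X' ->
  all (sem Phi Y X) (elp_rules P) = all (sem Phi Y' X') (elp_rules P).
Proof.
move=> wf hY hX; apply: (all_eq2 (wf_rule_in wf)) => r hr; exact: (sem_local Phi hr hY hX).
Qed.

Lemma agree_U1 A Y c : c \notin A -> agree A (Y `|` [fset c]) Y.
Proof.
move=> hc a ha; rewrite in_fsetU in_fset1.
case: eqP => [e|_]; last by rewrite orbF.
by move: hc; rewrite -e ha.
Qed.
Arguments agree_U1 : clear implicits.

Lemma fst_inj (S T : eqType) (f : S -> T) (s : seq S) x y : uniq (map f s) ->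
  x \in s -> y \in s -> f x = f y -> x = y.
Proof.
elim: s => //= z s IH /andP[hz hu]; rewrite !inE.
case/orP => [/eqP ->|hx]; case/orP => [/eqP ->|hy] //.
- by move=> e; move: hz; rewrite e map_f.
- by move=> e; move: hz; rewrite -e map_f.
- exact: IH.
Qed.

Definition cset (T : seq gad) : {fset atom} := foldr (fun t S => t.1 |` S) fset0 T.

Lemma mem_cset T x : (x \in cset T) = (x \in map fst T).
Proof. by elim: T => //= t T IH; rewrite in_fset1U IH inE. Qed.

Definition Qprog A T : elp atom := ELP (A `|` cset T) fset0 (Qrules A T).

Definition GA Phi P X Y : bool :=
  all (sem Phi Y Y) (elp_rules P) && ~~ ((X `<` Y) && all (sem Phi Y X) (elp_rules P)).

Lemma properU1 X Y c : X `<` Y -> c \notin Y -> X `|` [fset c] `<` Y `|` [fset c].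
Proof.
move=> hp hc; rewrite fproperE fsetSU ?(fproper_sub hp) //=.
move: hp; rewrite fproperE => /andP[_ /fsubsetPn [z hzY hzX]].
apply/fsubsetPn; exists z; first by rewrite in_fsetU hzY.
rewrite in_fsetU in_fset1 negb_or hzX /=; apply/eqP => e; move: hc; by rewrite -e hzY.
Qed.

Lemma AS_Q P T Phi M : wf_elp P -> uniq (map fst T) ->
  (forall t, t \in T -> t.1 \notin elp_atoms P) ->
  (forall t, t \in T -> t.2.1 `<=` t.2.2 /\ t.2.2 `<=` elp_atoms P) ->
  answer_set (elp_reduct (elp_union P (Qprog (elp_atoms P) T)) Phi) M <->
  exists2 t, t \in T & M = t.2.2 `|` [fset t.1] /\ GA Phi P t.2.1 t.2.2.
Proof.
set A := elp_atoms P => wf hu hA hXY.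
have csA : forall x, x \in map fst T -> x \notin A.
  by move=> x /mapP [t ht ->]; exact: hA.
have inA : forall t z, t \in T -> z \in t.2.2 -> z \in A.
  by move=> t z ht hz; exact: (fsubsetP (proj2 (hXY t ht))).
have neqc : forall t z, t \in T -> z \in A -> (z == t.1) = false.
  by move=> t z ht hz; apply/eqP => e; move: (hA t ht); rewrite -e hz.
have csU : forall t Z x, t \in T -> Z `<=` A -> x \in map fst T -> x \in Z `|` [fset t.1] -> x = t.1.
  move=> t Z x ht hZ hx; rewrite in_fsetU in_fset1 => /orP [hxZ|/eqP //].
  by move: (csA x hx); rewrite (fsubsetP hZ x hxZ).
have okt : forall t X', t \in T -> X' `<=` A -> (forall t', t' \in T -> t'.1 \in X' `|` [fset t.1] -> t' = t).
  move=> t X' ht hX' t' ht' h; apply: (fst_inj hu ht' ht).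
  exact: (csU t X' _ ht hX' (map_f _ ht') h).
rewrite AS_sem /= all_cat; split.
- case=> hsub /andP[hP hQ] hmin.
  have [hhas huq hok] := (Q_sem A T Phi M M).1 hQ.
  have [x hxcs hxM] := hasP hhas; have [t ht ex] := mapP hxcs; subst x.
  have [h1 h2 h3 h4] := hok t ht hxM.
  have [hXYt hYA] := hXY t ht.
  have eM : M = t.2.2 `|` [fset t.1].
    apply/fsetP => z; rewrite in_fsetU in_fset1; apply/idP/idP.
      move=> hz; have := fsubsetP hsub z hz; rewrite !in_fsetU mem_cset.
      have zA : z \in A -> z \in t.2.2.
        move=> hzA; case hzY: (z \in t.2.2) => //.
        by have := h3 z; rewrite in_fsetD hzY hzA hz => /(_ isT).
      case/orP => [/zA -> //|/orP [/zA -> //|hzcs]].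
      by rewrite (huq z t.1 hzcs hxcs hz hxM) eqxx orbT.
    case/orP => [hzY|/eqP -> //].
    case hzX: (z \in t.2.1); first exact: h1.
    by apply: h4; rewrite in_fsetD hzX hzY.
  exists t => //; split=> //.
  have agM : agree A M t.2.2 by rewrite eM; apply: agree_U1; exact: hA.
  rewrite /GA -(all_local Phi wf agM agM) hP /=.
  apply/negP => /andP[hprop hX].
  pose M' := t.2.1 `|` [fset t.1].
  have hM' : M' `<` M.
    rewrite eM; apply: properU1 => //; apply/negP => hc; move: (hA t ht).
    by rewrite (fsubsetP hYA _ hc).
  apply: (negP (hmin _ hM')); rewrite all_cat; apply/andP; split.
    by rewrite (all_local Phi wf agM (agree_U1 A t.2.1 t.1 (hA t ht))).
  have hXA : t.2.1 `<=` A := fsubset_trans hXYt hYA.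
  apply/(Q_sem A T Phi M M'); split.
  + apply/hasP; exists t.1; first exact: map_f.
    by rewrite /M' in_fsetU in_fset1 eqxx orbT.
  + move=> x y hx hy hxM' hyM'.
    by rewrite (csU t _ x ht hXA hx hxM') (csU t _ y ht hXA hy hyM').
  + move=> t' ht' hc'; rewrite (okt t t.2.1 ht hXA t' ht' hc').
    split.
    * by move=> a ha; rewrite /M' in_fsetU ha.
    * move=> a b _ hb; rewrite /M' in_fsetU in_fset1; case/orP.
        by move: hb; rewrite in_fsetD => /andP[/negbTE ->].
      by move: hb; rewrite in_fsetD => /andP[_ /(inA t _ ht) hbA]; rewrite (neqc t b ht hbA).
    * move=> a; rewrite in_fsetD => /andP[haY haA].
      rewrite /M' in_fsetU in_fset1 (neqc t a ht haA) orbF.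
      by apply/negP => /(fsubsetP hXYt); apply/negP.
    * by move=> b; rewrite in_fsetD eM in_fsetU => /andP[_ ->].
- case=> t ht [eM hGA]; case/andP: hGA => hPY hnot.
  have [hXYt hYA] := hXY t ht; have hcA := hA t ht.
  have agM : agree A M t.2.2 by rewrite eM; exact: agree_U1.
  have hYA' := hYA.
  have csM : forall x, x \in map fst T -> x \in M -> x = t.1.
    by move=> x hx; rewrite eM; exact: csU.
  split.
  + apply/fsubsetP => z; rewrite eM in_fsetU in_fset1 !in_fsetU mem_cset.
    case/orP => [hz|/eqP ->]; first by rewrite (fsubsetP hYA z hz).
    by rewrite map_f ?orbT.
  + rewrite (all_local Phi wf agM agM) hPY /=.
    apply/(Q_sem A T Phi M M); split.
    * apply/hasP; exists t.1; first exact: map_f.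
      by rewrite eM in_fsetU in_fset1 eqxx orbT.
    * by move=> x y hx hy hxM hyM; rewrite (csM x hx hxM) (csM y hy hyM).
    * move=> t' ht' hc'; have e : t' = t.
        by apply: (fst_inj hu ht' ht); apply: csM => //; exact: map_f.
      rewrite e; split.
      - by move=> a /(fsubsetP hXYt) ha; rewrite eM in_fsetU ha.
      - by move=> a b ha _ _; move: ha; rewrite in_fsetD eM in_fsetU => /andP[_ ->].
      - move=> a; rewrite in_fsetD => /andP[haY haA].
        by rewrite eM in_fsetU in_fset1 (neqc t a ht haA) orbF.
      - by move=> b; rewrite in_fsetD eM in_fsetU => /andP[_ ->].
  + move=> M' hM'; apply/negP; rewrite all_cat => /andP[hP' hQ'].
    have [hhas huq hok] := (Q_sem A T Phi M M').1 hQ'.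
    have hcM' : t.1 \in M'.
      have [x hxcs hxM'] := hasP hhas.
      by rewrite -(csM x hxcs (fsubsetP (fproper_sub hM') x hxM')).
    have [h1 h2 h3 h4] := hok t ht hcM'.
    have hnsub : ~~ (M `<=` M') by move: hM'; rewrite fproperE => /andP[].
    case: (boolP [exists b : t.2.2 `\` t.2.1, val b \in M']) => [/existsP [b hb]|hnb].
      move: hnsub; apply/negP; rewrite negbK; apply/fsubsetP => z.
      rewrite eM in_fsetU in_fset1 => /orP [hz|/eqP -> //].
      case hzX: (z \in t.2.1); first exact: h1.
      apply: (h2 z (val b)) => //; last exact: (valP b).
      by rewrite in_fsetD hzX hz.
    have agM' : agree A M' t.2.1.
      move=> a haA; apply/idP/idP; last exact: h1.
      move=> haM'; have := fsubsetP (fproper_sub hM') a haM'.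
      rewrite eM in_fsetU in_fset1 (neqc t a ht haA) orbF => haY.
      case haX: (a \in t.2.1) => //.
      have haD : a \in t.2.2 `\` t.2.1 by rewrite in_fsetD haX haY.
      by move/existsP: hnb; case; exists [` haD].
    have hX := hP'; rewrite (all_local Phi wf agM agM') in hX.
    move: hnot; rewrite hX andbT fproperEneq hXYt andbT negbK.
    move/eqP => eXY; move: hnsub; apply/negP; rewrite negbK; apply/fsubsetP => z.
    rewrite eM in_fsetU in_fset1 => /orP [hz|/eqP -> //].
    by apply: h1; rewrite eXY.
Qed.

Lemma Q_wf A T : (forall t, t \in T -> t.2.1 `<=` t.2.2 /\ t.2.2 `<=` A) ->
  wf_elp (Qprog A T).
Proof.
move=> hXY; split; first by move=> l; rewrite in_fset0.
have inA : forall a, a \in A -> a \in A `|` cset T by move=> a ha; rewrite in_fsetU ha.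
have inC : forall t, t \in T -> t.1 \in A `|` cset T.
  by move=> t ht; rewrite in_fsetU mem_cset map_f ?orbT.
rewrite /= /Qrules /= all_cat all_allpairs all_flatten_map; apply/andP; split.
  rewrite !andbT; apply/allP => x /mapP [t ht ->]; exact: inC.
apply/andP; split.
  apply/allP => x /mapP [t ht ->]; apply/allP => y; rewrite mem_filter => /andP[_ /mapP [t' ht' ->]].
  by rewrite /= !inC.
apply/allP => t ht; have [h1 h2] := hXY t ht.
have hYA : forall a, a \in t.2.2 -> a \in A `|` cset T.
  by move=> a /(fsubsetP h2) /inA.
rewrite /gad_rules !all_cat !all_map all_allpairs /=; apply/and4P; split.
- apply/allP => a ha /=; rewrite (inC t ht) (hYA a (fsubsetP h1 a ha)) //.
- apply/allP => a; rewrite mem_enum_fset in_fsetD => /andP[_ ha]; apply/allP => b.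
  rewrite mem_enum_fset in_fsetD => /andP[_ hb] /=; by rewrite (inC t ht) hYA ?hYA.
- apply/allP => a; rewrite mem_enum_fset in_fsetD => /andP[_ ha] /=; by rewrite (inC t ht) inA.
- apply/allP => b; rewrite mem_enum_fset in_fsetD => /andP[_ hb] /=; by rewrite (inC t ht) hYA.
Qed.

Lemma Q_plain A T : is_plain (Qprog A T).
Proof.
split=> //=; rewrite /Qrules /= all_cat all_allpairs all_flatten_map.
apply/andP; split; first by apply/allP => x _; apply/allP.
apply/allP => t _; rewrite /gad_rules !all_cat !all_map all_allpairs.
by apply/and4P; split; apply/allP => // a _; apply/allP.
Qed.

Lemma mkT A (gs : seq ({fset atom} * {fset atom})) :
  (forall s : {fset atom}, exists a, a \notin s) ->
  exists T : seq gad, [/\ map snd T = gs, uniq (map fst T) &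
                          forall t, t \in T -> t.1 \notin A].
Proof.
move=> inf; elim: gs => [|g gs [T [e hu hA]]]; first by exists [::].
have [a ha] := inf (A `|` cset T).
exists ((a, g) :: T); split; first by rewrite /= e.
  by move: ha; rewrite /= hu in_fsetU mem_cset negb_or => /andP[_ ->].
move=> t; rewrite inE => /orP [/eqP -> /=|/hA //].
by move: ha; rewrite in_fsetU negb_or => /andP[].
Qed.

Lemma witness P Phi : realizable P Phi ->
  exists W : seq {fset atom}, [/\ W != [::],
    (forall I, I \in W -> is_model (elp_reduct P Phi) I),
    (forall l, l \in Phi -> exists I, I \in W /\ ~~ sat_lit I l) &
    (forall l, l \in elp_elits P -> l \notin Phi -> forall I, I \in W -> sat_lit I l)].
Proof.
move=> [Ic [hm [[I0 h0] [h1 h2]]]].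
have : forall s : seq lit, (forall l, l \in s -> l \in Phi) ->
   exists W : seq {fset atom}, (forall I, I \in W -> Ic I) /\
     forall l, l \in s -> exists I, I \in W /\ ~~ sat_lit I l.
  elim=> [|l s IH] hs; first by exists [::].
  have hs' : forall x, x \in s -> x \in Phi by move=> x hx; apply: hs; rewrite inE hx orbT.
  have [W [hW1 hW2]] := IH hs'.
  have [I [hI hl]] := h1 l (hs l (mem_head _ _)).
  exists (I :: W); split.
    by move=> J; rewrite inE => /orP [/eqP ->|/hW1].
  move=> x; rewrite inE => /orP [/eqP ->|/hW2 [J [hJ hx]]].
    by exists I; rewrite mem_head.
  by exists J; rewrite inE hJ orbT.
move=> H; have [W [hW1 hW2]] := H (enum_fset Phi) (fun (l : lit) (hl : l \in enum_fset Phi) => hl).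
exists (I0 :: W); split=> //.
- by move=> I; rewrite inE => /orP [/eqP ->|/hW1]; apply: hm.
- move=> l hl; have [J [hJ hx]] := hW2 l hl; by exists J; rewrite inE hJ orbT.
- move=> l hE hn I; rewrite inE => /orP [/eqP ->|/hW1]; exact: h2.
Qed.

Lemma sat_U1 A Y c l : c \notin A -> l.2 \in A -> sat_lit (Y `|` [fset c]) l = sat_lit Y l.
Proof. move=> hc hl; exact: (sat_lit_agree (agree_U1 A Y c hc) hl). Qed.

Lemma GA_refl Phi P I : all (sem Phi I I) (elp_rules P) -> GA Phi P I I.
Proof. by move=> h; rewrite /GA h fproperEneq eqxx. Qed.

Lemma win_lose P P' Phi (W : seq {fset atom}) X0 Y0 :
  (forall s : {fset atom}, exists a, a \notin s) ->
  wf_elp P -> wf_elp P' -> elp_atoms P = elp_atoms P' -> elp_elits P = elp_elits P' ->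
  Phi `<=` elp_elits P -> W != [::] ->
  (forall I, I \in W -> I `<=` elp_atoms P /\ all (sem Phi I I) (elp_rules P)) ->
  (forall l, l \in Phi -> exists I, I \in W /\ ~~ sat_lit I l) ->
  (forall l, l \in elp_elits P -> l \notin Phi -> forall I, I \in W -> sat_lit I l) ->
  X0 `<=` Y0 -> Y0 `<=` elp_atoms P ->
  (GA Phi P X0 Y0 /\ (forall l, l \in elp_elits P -> l \notin Phi -> sat_lit Y0 l)) \/
  (~~ GA Phi P X0 Y0 /\ exists l, [/\ l \in elp_elits P, l \notin Phi & ~~ sat_lit Y0 l]) ->
  (~ realizable P' Phi) \/ (GA Phi P X0 Y0 != GA Phi P' X0 Y0) ->
  exists Q, [/\ wf_elp Q, is_plain Q &
    exists Ic, is_wv (elp_union P Q) Ic /\ ~ is_cwv (elp_union P' Q) Ic].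
Proof.
move=> inf wf wf' sA sE hPhi hW hWm hW1 hW2 hXY0 hY0 hcond hlose.
set A := elp_atoms P in sA hWm hY0 *; set E := elp_elits P in sE hPhi hW1 hW2 hcond *.
pose gs := map (fun I => (I, I)) W ++ [:: (X0, Y0)].
have [T [eT hu hA]] := mkT A gs inf.
have hT : forall t, t \in T -> (exists2 I, I \in W & t.2 = (I, I)) \/ t.2 = (X0, Y0).
  move=> t ht; have : t.2 \in gs by rewrite -eT map_f.
  rewrite mem_cat mem_seq1 => /orP [/mapP [I hI ->]|/eqP ->]; [left; by exists I | by right].
have hTg : forall g, g \in gs -> exists2 t, t \in T & t.2 = g.
  by move=> g; rewrite -eT => /mapP [t ht ->]; exists t.
have hXY : forall t, t \in T -> t.2.1 `<=` t.2.2 /\ t.2.2 `<=` A.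
  move=> t /hT [[I /hWm [hI _] ->]|->] //=; split=> //; exact: fsubset_refl.
have lA : forall l, l \in E -> l.2 \in A by move=> l; apply: (proj1 wf).
pose Q := Qprog A T.
have AS1 := fun Phi1 M => @AS_Q P T Phi1 M wf hu hA hXY.
have AS2 : forall Phi1 M, answer_set (elp_reduct (elp_union P' Q) Phi1) M <->
    exists2 t, t \in T & M = t.2.2 `|` [fset t.1] /\ GA Phi1 P' t.2.1 t.2.2.
  move=> Phi1 M; rewrite /Q sA; apply: AS_Q => //; rewrite -sA //.
have tinj : forall t t', t \in T -> t' \in T ->
    t.2.2 `|` [fset t.1] = t'.2.2 `|` [fset t'.1] -> t = t'.
  move=> t t' ht ht' e; apply: (fst_inj hu ht ht').
  have : t.1 \in t'.2.2 `|` [fset t'.1] by rewrite -e in_fsetU in_fset1 eqxx orbT.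
  rewrite in_fsetU in_fset1 => /orP [h|/eqP //].
  by move: (hA t ht); rewrite (fsubsetP (proj2 (hXY t' ht')) _ h).
have [t0 ht0 et0] : exists2 t, t \in T & t.2 = (X0, Y0).
  by apply: hTg; rewrite mem_cat mem_seq1 eqxx orbT.
pose Ic M := answer_set (elp_reduct (elp_union P Q) Phi) M.
have EU : elp_elits (elp_union P Q) = E `|` fset0 by [].
have EU' : elp_elits (elp_union P' Q) = E `|` fset0 by rewrite /= -sE.
have hPhiU : Phi `<=` E `|` fset0 by rewrite fsetU0.
have satT : forall t l, t \in T -> l \in E -> sat_lit (t.2.2 `|` [fset t.1]) l = sat_lit t.2.2 l.
  by move=> t l ht hl; apply: sat_U1; [exact: hA | exact: lA].
have compI : compatible Ic Phi (E `|` fset0).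
  split; [|split].
  - have [I0 hI0] : exists I0, I0 \in W.
      by case: (W) hW => // I0 W' _; exists I0; rewrite mem_head.
    have := hTg (I0, I0); rewrite mem_cat map_f // => /(_ isT) [t ht et].
    exists (t.2.2 `|` [fset t.1]); apply/AS1; exists t => //; split=> //.
    rewrite et /=; apply: GA_refl; exact: (proj2 (hWm I0 hI0)).
  - move=> l hl; have [I [hI hs]] := hW1 l hl.
    have := hTg (I, I); rewrite mem_cat map_f // => /(_ isT) [t ht et].
    exists (t.2.2 `|` [fset t.1]); split.
      apply/AS1; exists t => //; split=> //; rewrite et /=; apply: GA_refl.
      exact: (proj2 (hWm I hI)).
    by rewrite satT // ?et // (fsubsetP hPhi).
  - move=> l; rewrite fsetU0 => hlE hlP M /AS1 [t ht [-> hga]].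
    rewrite satT //; case: (hT t ht) => [[I hI et]|et]; rewrite et /=.
      exact: hW2.
    move: hga; rewrite et /= => hga.
    by case: hcond => [[_ ->]|[/negP hn _]].
exists Q; split; [exact: Q_wf | exact: Q_plain |].
exists Ic; split.
  exists Phi; split; first by split=> //; split=> //; rewrite EU.
  move=> Phi' Ic' [hsub' [hIc' hcomp']]; apply/negP => hprop.
  have hsub1 : Phi `<=` Phi' := fproper_sub hprop.
  have key : forall l, l \in Phi' -> l \notin Phi ->
      ~~ sat_lit Y0 l /\ GA Phi' P X0 Y0.
    move=> l hl hn; have hlE : l \in E by move: (fsubsetP hsub' l hl); rewrite EU fsetU0.
    have [M [/hIc' /AS1 [t ht [eM hga]] hs]] := (proj1 (proj2 hcomp')) l hl.
    move: hs; rewrite eM satT //.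
    case: (hT t ht) => [[I hI et]|et]; rewrite et /=.
      by rewrite (hW2 l hlE hn I hI).
    by move: hga; rewrite et.
  move: hprop; rewrite fproperE => /andP[_ /fsubsetPn [l0 hl0 hn0]].
  have [hs0 hga0] := key l0 hl0 hn0.
  have eGA : GA Phi' P X0 Y0 = GA Phi P X0 Y0.
    have inv : forall X, all (sem Phi' Y0 X) (elp_rules P) = all (sem Phi Y0 X) (elp_rules P).
      move=> X; apply: eq_all => r; apply: sem_inv => // l hl hn; exact: (proj1 (key l hl hn)).
    by rewrite /GA !inv.
  have hl0E : l0 \in E by move: (fsubsetP hsub' l0 hl0); rewrite EU fsetU0.
  rewrite eGA in hga0.
  case: hcond => [[_ h]|[/negP h _]]; last by apply: h.
  by move: hs0; rewrite (h l0 hl0E hn0).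
move=> [Psi [hsubP [hIcP hcompP]]].
have ePsi : Psi = Phi.
  apply: (compat_uniq (E := E `|` fset0)); first by rewrite -EU'.
  - exact: hPhiU.
  - rewrite -EU'; exact: hcompP.
  - exact: compI.
subst Psi.
case: hlose => [hnr|hne].
  apply: hnr.
  exists (fun J => exists2 t, t \in T & J = t.2.2 /\ GA Phi P' t.2.1 t.2.2); split.
    move=> J [t ht [-> /andP [hm _]]]; apply/model_sem; split=> //.
    by rewrite -sA; exact: (proj2 (hXY t ht)).
  case: compI => [[M hM] _]; have [hne [hcp1 hcp2]] := hcompP.
  split; [|split].
  - have [t ht [_ hga]] := (AS2 Phi M).1 ((hIcP M).1 hM).
    by exists t.2.2; exists t.
  - move=> l hl; have [M' [hM' hs]] := hcp1 l hl.
    have [t ht [eM hga]] := (AS2 Phi M').1 ((hIcP M').1 hM').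
    exists t.2.2; split; first by exists t.
    by move: hs; rewrite eM satT // (fsubsetP hPhi).
  - move=> l hlE hlP J [t ht [-> hga]].
    have hM' : Ic (t.2.2 `|` [fset t.1]) by apply/hIcP/AS2; exists t.
    have hlE' : l \in E by rewrite sE.
    have := hcp2 l _ hlP _ hM'; rewrite EU' fsetU0 => /(_ hlE').
    by rewrite satT.
move: hne; apply/negP; rewrite negbK.
pose M0 := t0.2.2 `|` [fset t0.1].
have h1 : Ic M0 <-> GA Phi P X0 Y0.
  split.
    by move/AS1 => [t ht [e hga]]; move: hga; rewrite -(tinj _ _ ht0 ht e) et0.
  by move=> h; apply/(AS1 Phi M0); exists t0 => //; split; [by [] | rewrite et0].
have h2 : Ic M0 <-> GA Phi P' X0 Y0.
  rewrite hIcP; split.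
    by move/AS2 => [t ht [e hga]]; move: hga; rewrite -(tinj _ _ ht0 ht e) et0.
  by move=> h; apply/(AS2 Phi M0); exists t0 => //; split; [by [] | rewrite et0].
apply/eqP; apply/idP/idP => h.
  by apply/h2/h1.
by apply/h1/h2.
Qed.

Definition sepr P1 P2 := exists Q, [/\ wf_elp Q, is_plain Q &
  exists Ic, is_wv (elp_union P1 Q) Ic /\ ~ is_cwv (elp_union P2 Q) Ic].

Lemma win_lose2 P P' Phi X0 Y0 :
  (forall s : {fset atom}, exists a, a \notin s) ->
  wf_elp P -> wf_elp P' -> elp_atoms P = elp_atoms P' -> elp_elits P = elp_elits P' ->
  Phi `<=` elp_elits P -> realizable P Phi ->
  X0 `<=` Y0 -> Y0 `<=` elp_atoms P ->
  (GA Phi P X0 Y0 /\ (forall l, l \in elp_elits P -> l \notin Phi -> sat_lit Y0 l)) \/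
  (~~ GA Phi P X0 Y0 /\ exists l, [/\ l \in elp_elits P, l \notin Phi & ~~ sat_lit Y0 l]) ->
  (~ realizable P' Phi) \/ (GA Phi P X0 Y0 != GA Phi P' X0 Y0) ->
  sepr P P'.
Proof.
move=> inf wf wf' sA sE hPhi /witness [W [hW hWm hW1 hW2]] h1 h2 hc hl.
apply: (win_lose inf wf wf' sA sE hPhi hW _ hW1 hW2 h1 h2 hc hl).
by move=> I /hWm /model_sem.
Qed.

Lemma one_side Pa Pb Phi X Y :
  (forall s : {fset atom}, exists a, a \notin s) ->
  wf_elp Pa -> wf_elp Pb -> elp_atoms Pa = elp_atoms Pb -> elp_elits Pa = elp_elits Pb ->
  Phi `<=` elp_elits Pa -> SE_fun Pa Phi X Y -> ~ SE_fun Pb Phi X Y ->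
  sepr Pa Pb \/ sepr Pb Pa.
Proof.
move=> inf wfa wfb sA sE hPhi [ra sea] nse.
have hPhib : Phi `<=` elp_elits Pb by rewrite -sE.
case: (classic (realizable Pb Phi)) => rb; last first.
  left; have [W [hW hWm hW1 hW2]] := witness ra.
  have [I0 hI0] : exists I0, I0 \in W.
    by case: (W) hW => // I0 W' _; exists I0; rewrite mem_head.
  have [hIA hIm] := (model_sem _ _ _).1 (hWm I0 hI0).
  apply: (win_lose2 inf wfa wfb sA sE hPhi ra (fsubset_refl I0) hIA); last by left.
  left; split; first exact: GA_refl.
  by move=> l hl hn; exact: hW2.
have nseb : ~ se_model (elp_reduct Pb Phi) X Y by move=> h; apply: nse.
have [hXY hYA hTaY hTaX] := (se_sem _ _ _ _).1 sea.
have hYAb : Y `<=` elp_atoms Pb by rewrite -sA.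
pose X0 := if all (sem Phi Y Y) (elp_rules Pb) then X else Y.
have hX0 : X0 `<=` Y by rewrite /X0; case: ifP => _ //; exact: fsubset_refl.
have hne : GA Phi Pa X0 Y != GA Phi Pb X0 Y.
  rewrite /X0; case hTb: (all (sem Phi Y Y) (elp_rules Pb)).
    have hTbX : all (sem Phi Y X) (elp_rules Pb) = false.
      apply/negbTE/negP => h; apply: nseb; apply/se_sem; split=> //.
    have hXneY : X != Y.
      by apply/eqP => e; move: hTbX; rewrite e hTb.
    rewrite /GA hTaY hTb hTbX fproperEneq hXneY hXY hTaX /=.
    by [].
  by rewrite /GA hTb /= hTaY fproperEneq eqxx.
case: (classic (forall l, l \in elp_elits Pa -> l \notin Phi -> sat_lit Y l)) => hsat.
  case hga: (GA Phi Pa X0 Y).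
    left; apply: (win_lose2 inf wfa wfb sA sE hPhi ra hX0 hYA); first by left.
    by right.
  right; move: hne; rewrite hga eq_sym => hgb.
  have hgb' : GA Phi Pb X0 Y by move: hgb; case: (GA _ _ _ _).
  apply: (win_lose2 inf wfb wfa (esym sA) (esym sE) hPhib rb hX0 hYAb).
    by left; split=> //; rewrite -sE.
  by right; rewrite hgb' hga.
have [l [hlE hlP hls]] : exists l, [/\ l \in elp_elits Pa, l \notin Phi & ~~ sat_lit Y l].
  apply: NNPP => hn; apply: hsat => l hl hp; apply/negPn/negP => hs.
  by apply: hn; exists l.
case hga: (GA Phi Pa X0 Y).
  right; move: hne; rewrite hga => hgb.
  have hgb' : GA Phi Pb X0 Y = false by move: hgb; case: (GA _ _ _ _).
  apply: (win_lose2 inf wfb wfa (esym sA) (esym sE) hPhib rb hX0 hYAb).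
    by right; split; [rewrite hgb' | exists l; rewrite -sE].
  by right; rewrite hgb' hga.
left; apply: (win_lose2 inf wfa wfb sA sE hPhi ra hX0 hYA).
  by right; split; [rewrite hga | exists l].
by right.
Qed.

Lemma sepr_wv1 P1 P2 : sepr P1 P2 ->
  exists Q, [/\ wf_elp Q, is_plain Q, ~ wv_equiv (elp_union P1 Q) (elp_union P2 Q)
    & ~ cwv_equiv (elp_union P1 Q) (elp_union P2 Q)].
Proof.
move=> [Q [wf pl [Ic [hw hn]]]]; exists Q; split=> // h.
- have [Phi' [hc' _]] := (h Ic).1 hw; apply: hn; by exists Phi'.
- have [Phi [hc _]] := hw; apply: hn; apply/(h Ic).1; by exists Phi.
Qed.

Lemma sepr_wv P1 P2 : sepr P1 P2 \/ sepr P2 P1 ->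
  exists Q, [/\ wf_elp Q, is_plain Q, ~ wv_equiv (elp_union P1 Q) (elp_union P2 Q)
    & ~ cwv_equiv (elp_union P1 Q) (elp_union P2 Q)].
Proof.
case; first exact: sepr_wv1.
move/sepr_wv1 => [Q [wf pl n1 n2]]; exists Q; split=> // h.
- by apply: n1 => Ic; apply: iff_sym.
- by apply: n2 => Ic; apply: iff_sym.
Qed.

Lemma not_same P1 P2 :
  (forall s : {fset atom}, exists a, a \notin s) ->
  wf_elp P1 -> wf_elp P2 -> elp_atoms P1 = elp_atoms P2 -> elp_elits P1 = elp_elits P2 ->
  (forall Q, wf_elp Q -> is_plain Q ->
     wv_equiv (elp_union P1 Q) (elp_union P2 Q) \/ cwv_equiv (elp_union P1 Q) (elp_union P2 Q)) ->
  same_SE_fun P1 P2.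
Proof.
move=> inf wf1 wf2 sA sE H Phi h1 h2 X Y.
have contra : sepr P1 P2 \/ sepr P2 P1 -> False.
  move/sepr_wv => [Q [wfQ plQ n1 n2]]; by case: (H Q wfQ plQ).
case: (classic (SE_fun P1 Phi X Y)) => s1; case: (classic (SE_fun P2 Phi X Y)) => s2 //.
- exfalso; apply: contra; exact: (one_side inf wf1 wf2 sA sE h1 s1 s2).
- exfalso; apply: contra.
  have := one_side inf wf2 wf1 (esym sA) (esym sE) h2 s2 s1; case; by [right|left].
Qed.

End Work.

Unset Implicit Arguments.
Local Close Scope fset_scope.

Theorem corollary1 (atom : choiceType)
  (atom_infinite : forall s : {fset atom}, exists a : atom, a \notin s)
  (P1 P2 : elp atom)
  (wf1 : wf_elp P1) (wf2 : wf_elp P2)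
  (sameA : elp_atoms P1 = elp_atoms P2)
  (sameE : elp_elits P1 = elp_elits P2) :
  [/\ strong_elp_wv_equiv P1 P2 <-> same_SE_fun P1 P2,
      strong_asp_wv_equiv P1 P2 <-> same_SE_fun P1 P2,
      strong_elp_cwv_equiv P1 P2 <-> same_SE_fun P1 P2
    & strong_asp_cwv_equiv P1 P2 <-> same_SE_fun P1 P2].
Proof.
have cwv : same_SE_fun P1 P2 -> strong_elp_cwv_equiv P1 P2.
  move=> h Q _ Ic; split; first exact: (fwd wf1 wf2 sameA sameE h).
  exact: (fwd wf2 wf1 (esym sameA) (esym sameE) (sym_SE h)).
have wv : same_SE_fun P1 P2 -> strong_elp_wv_equiv P1 P2.
  move=> h Q wfQ; apply: cwv_wv; first by rewrite /= sameE.
  exact: cwv h Q wfQ.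
have back := not_same atom_infinite wf1 wf2 sameA sameE.
split; split.
- by move=> h; apply: back => Q wfQ _; left; exact: h.
- exact: wv.
- by move=> h; apply: back => Q wfQ plQ; left; exact: h.
- by move=> h Q wfQ _; exact: wv.
- by move=> h; apply: back => Q wfQ _; right; exact: h.
- exact: cwv.
- by move=> h; apply: back => Q wfQ plQ; right; exact: h.
- by move=> h Q wfQ _; exact: cwv.
Qed.
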